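(* If a learning dynamic over $n$ actions is finitely passive (resp. finitely lossless), then for any mixed strategy $\mathbf{x}^*\in\Delta^n$, its learning operator with shift $\mathbf{x}^*$ is finitely passive (resp. finitely lossless).
   Context: $\Delta^n=\{\mathbf{x}\in\mathbb{R}^n: x_j\ge 0,\ \sum_j x_j=1\}$; $\mathbf{e}_j$ is the $j$-th standard basis vector. A learning dynamic over $n$ actions is specified by a conversion function $f:\mathbb{R}^n\to\Delta^n$: given an initial state $\mathbf{q}^0\in\mathbb{R}^n$ and an input function $\mathbf{p}:[0,\infty)\to\mathbb{R}^n$ square integrable on bounded intervals, the state is $\mathbf{q}(t)=\mathbf{q}^0+\int_0^t\mathbf{p}(\tau)\,d\tau$ and the strategy is $\mathbf{x}(t)=f(\mathbf{q}(t))$. The learning operator with shift $\mathbf{x}^*\in\mathbb{R}^n$ has state $\mathbf{q}$, input $\mathbf{p}$, output $\mathbf{x}-\mathbf{x}^*$; it is passive via a storage function $L:\mathbb{R}^n\to\mathbb{R}$ if for every $\mathbf{q}^0$, every $\mathbf{p}$ and every $t\ge0$, $L(\mathbf{q}(t))\le L(\mathbf{q}^0)+\int_0^t\langle\mathbf{p}(\tau),\mathbf{x}(\tau)-\mathbf{x}^*\rangle\,d\tau$, lossless if equality always holds, and finitely passive (resp. finitely lossless) if it is passive (resp. lossless) via a storage function that is bounded from below. A learning dynamic is finitely passive (resp. finitely lossless) if for every action $j$ its learning operator with shift $\mathbf{e}_j$ is finitely passive (resp. finitely lossless). *)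

(* Defs.v *)
From HB Require Import structures.
From mathcomp Require Import all_boot all_order all_algebra.
From mathcomp Require Import all_classical all_reals all_analysis.
Set Implicit Arguments. Unset Strict Implicit. Unset Printing Implicit Defensive.
Import Order.TTheory GRing.Theory Num.Theory.
Import numFieldNormedType.Exports.
Local Open Scope classical_set_scope.
Local Open Scope ring_scope.

Section LearningDefs.
Variables (R : realType) (n : nat).

Definition vecR := 'I_n -> R.

Definition in_simplex (x : vecR) : Prop :=
  (forall j, 0 <= x j) /\ \sum_(j < n) x j = 1.

Definition basis_vec (j : 'I_n) : vecR := fun i => (i == j)%:R.

Definition dotR (u v : vecR) : R := \sum_(j < n) u j * v j.

Definition conversion_function (f : vecR -> vecR) : Prop :=
  forall q, in_simplex (f q).

(* input p : [0,oo) -> R^n square integrable on bounded intervals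
   (values of p at negative times are irrelevant) *)
Definition sq_int_bounded (p : R -> vecR) : Prop :=
  forall t : R, 0 <= t -> forall j : 'I_n,
    measurable_fun `[0, t] (fun s => p s j) /\
    (lebesgue_measure).-integrable `[0, t] (fun s => ((p s j) ^+ 2)%:E).

Definition state (q0 : vecR) (p : R -> vecR) (t : R) : vecR :=
  fun j => q0 j + Rintegral lebesgue_measure `[0, t] (fun s => p s j).

Definition supply (f : vecR -> vecR) (xs : vecR) (q0 : vecR) (p : R -> vecR)
  (s : R) : R :=
  dotR (p s) (fun j => f (state q0 p s) j - xs j).

(* passive via storage function L (learning operator with shift xs).
   The inequality is required whenever the supply integral exists
   (it always does when f is Borel measurable). *)
Definition passive_via (f : vecR -> vecR) (xs : vecR) (L : vecR -> R) : Prop :=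
  forall (q0 : vecR) (p : R -> vecR), sq_int_bounded p ->
  forall t : R, 0 <= t ->
    (lebesgue_measure).-integrable `[0, t] (fun s => (supply f xs q0 p s)%:E) ->
    L (state q0 p t) <= L q0 + Rintegral lebesgue_measure `[0, t] (supply f xs q0 p).

Definition lossless_via (f : vecR -> vecR) (xs : vecR) (L : vecR -> R) : Prop :=
  forall (q0 : vecR) (p : R -> vecR), sq_int_bounded p ->
  forall t : R, 0 <= t ->
    (lebesgue_measure).-integrable `[0, t] (fun s => (supply f xs q0 p s)%:E) ->
    L (state q0 p t) = L q0 + Rintegral lebesgue_measure `[0, t] (supply f xs q0 p).

Definition bounded_below (L : vecR -> R) : Prop := exists m : R, forall q, m <= L q.

Definition finitely_passive_op (f : vecR -> vecR) (xs : vecR) : Prop :=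
  exists L, bounded_below L /\ passive_via f xs L.

Definition finitely_lossless_op (f : vecR -> vecR) (xs : vecR) : Prop :=
  exists L, bounded_below L /\ lossless_via f xs L.

Definition finitely_passive_dyn (f : vecR -> vecR) : Prop :=
  forall j : 'I_n, finitely_passive_op f (basis_vec j).

Definition finitely_lossless_dyn (f : vecR -> vecR) : Prop :=
  forall j : 'I_n, finitely_lossless_op f (basis_vec j).

End LearningDefs.

(* Main.v *)
Require Import Defs.
From mathcomp Require Import all_boot all_order all_algebra.
From mathcomp Require Import all_classical all_reals all_analysis.
From mathcomp Require Import ring lra.
From mathcomp Require Import measurable_realfun.
Import Order.TTheory GRing.Theory Num.Theory.
Import numFieldNormedType.Exports.
Local Open Scope classical_set_scope.
Local Open Scope ring_scope.

Lemma Rint_sum (R : realType) (I : Type) (t : R) (s : seq I) (h : I -> R -> R) :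
  let D := `[0, t]%classic in (forall i, (@lebesgue_measure R).-integrable D (EFin \o h i)) ->
  (@lebesgue_measure R).-integrable D (EFin \o (fun x => \sum_(i <- s) h i x)) /\
  Rintegral lebesgue_measure D (fun x => \sum_(i <- s) h i x)
  = \sum_(i <- s) Rintegral lebesgue_measure D (h i).
Proof.
move=> D hi; have mD : measurable (D : set (measurableTypeR R)) by exact: measurable_itv.
elim: s => [|a s [IHi IHe]].
  split.
    apply: (eq_integrable _ (cst 0%E)) => //; first by move=> x _; rewrite /= big_nil.
    exact: integrable0.
  rewrite big_nil (@eq_Rintegral _ _ _ _ _ (fun _ => 0)); last by move=> x _; rewrite big_nil.
  by rewrite Rintegral_cst // mul0r.
split.
  have H := integrableD mD (hi a) IHi. apply: (eq_integrable mD _ _ _ H).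
  by move=> x _; rewrite /= big_cons.
rewrite big_cons -IHe -RintegralD //.
by apply: eq_Rintegral => x _; rewrite big_cons.
Qed.

Lemma abs_le_sq (R : realType) (x : R) : `|x| <= 1 + x ^+ 2.
Proof.
rewrite -(real_normK (num_real x)).
have := normr_ge0 x; set a := `|x|; nra.
Qed.

Lemma p_integrable (R : realType) (n : nat) (p : R -> vecR R n) (t : R) (i : 'I_n) :
  sq_int_bounded p -> 0 <= t ->
  (@lebesgue_measure R).-integrable `[0, t] (EFin \o (fun s => p s i)).
Proof.
move=> hp t0; have [mp ip] := hp t t0 i.
have mD : measurable (`[0, t]%classic : set (measurableTypeR R)) by exact: measurable_itv.
apply: (@le_integrable _ _ _ _ _ mD _ ((EFin \o cst 1) \+ (fun s => ((p s i) ^+ 2)%:E)%E)) => //.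
- exact/measurable_EFinP.
- move=> x _ /=; rewrite lee_fin (ger0_norm (_ : 0 <= 1 + p x i ^+ 2)); last by rewrite addr_ge0 // sqr_ge0.
  exact: abs_le_sq.
- apply: (integrableD mD) => //.
  apply: continuous_compact_integrable; first exact: segment_compact.
  by move=> x; exact: cvg_cst.
Qed.

Lemma supply_decomp (R : realType) (n : nat) (f : vecR R n -> vecR R n) (xs q0 : vecR R n)
  (p : R -> vecR R n) (s : R) : \sum_(j < n) xs j = 1 ->
  supply f xs q0 p s = \sum_(j < n) xs j * supply f (@basis_vec R n j) q0 p s.
Proof.
move=> hs; rewrite /supply /dotR.
under [RHS]eq_bigr do rewrite mulr_sumr.
rewrite exchange_big /=; apply: eq_bigr => i _.
have -> : \sum_(j < n) xs j * (p s i * (f (state q0 p s) i - @basis_vec R n j i))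
  = (\sum_(j < n) xs j) * (p s i * f (state q0 p s) i)
    - p s i * \sum_(j < n) xs j * @basis_vec R n j i.
  rewrite mulr_suml mulr_sumr -sumrB; apply: eq_bigr => j _; ring.
rewrite hs mul1r (bigD1 i) //= /basis_vec eqxx mulr1 big1 ?addr0; first ring.
by move=> j /negPf ji; rewrite eq_sym ji mulr0.
Qed.

Lemma supply_shift (R : realType) (n : nat) (f : vecR R n -> vecR R n) (xs ys q0 : vecR R n)
  (p : R -> vecR R n) (s : R) :
  supply f ys q0 p s = supply f xs q0 p s + \sum_(i < n) p s i * (xs i - ys i).
Proof.
rewrite /supply /dotR -big_split /=; apply: eq_bigr => i _; ring.
Qed.

Lemma supply_integrable (R : realType) (n : nat) (f : vecR R n -> vecR R n) (xs ys q0 : vecR R n)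
  (p : R -> vecR R n) (t : R) : sq_int_bounded p -> 0 <= t ->
  (@lebesgue_measure R).-integrable `[0, t] (fun s => (supply f xs q0 p s)%:E) ->
  (@lebesgue_measure R).-integrable `[0, t] (fun s => (supply f ys q0 p s)%:E).
Proof.
move=> hp t0 hi.
have mD : measurable (`[0, t]%classic : set (measurableTypeR R)) by exact: measurable_itv.
have [hsum _] := @Rint_sum R 'I_n t (index_enum 'I_n) (fun i s => p s i * (xs i - ys i))
  (fun i => eq_integrable mD _ _ (fun x _ => esym (EFinM _ _))
             (integrableZr mD (xs i - ys i) (@p_integrable R n p t i hp t0))).
apply: (eq_integrable mD _ _ _ (integrableD mD hi hsum)).
by move=> x _; rewrite (@supply_shift R n f xs ys) /= EFinD.
Qed.

Lemma combo (R : realType) (n : nat) (f : vecR R n -> vecR R n) (xs q0 : vecR R n)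
  (p : R -> vecR R n) (t : R) : \sum_(j < n) xs j = 1 -> sq_int_bounded p -> 0 <= t ->
  (@lebesgue_measure R).-integrable `[0, t] (fun s => (supply f xs q0 p s)%:E) ->
  Rintegral lebesgue_measure `[0, t] (supply f xs q0 p) =
  \sum_(j < n) xs j * Rintegral lebesgue_measure `[0, t] (supply f (@basis_vec R n j) q0 p).
Proof.
move=> hs hp t0 hi.
have mD : measurable (`[0, t]%classic : set (measurableTypeR R)) by exact: measurable_itv.
have hj j := @supply_integrable R n f xs (@basis_vec R n j) q0 p t hp t0 hi.
have hj' j : (@lebesgue_measure R).-integrable `[0, t]
   (EFin \o (fun s => xs j * supply f (@basis_vec R n j) q0 p s)).
  apply: (eq_integrable mD _ _ _ (integrableZl mD (xs j) (hj j))).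
  by move=> x _; rewrite /= EFinM.
have [_ He] := @Rint_sum R 'I_n t (index_enum 'I_n)
  (fun j s => xs j * supply f (@basis_vec R n j) q0 p s) hj'.
transitivity (Rintegral lebesgue_measure `[0, t]
   (fun s => \sum_(j < n) xs j * supply f (@basis_vec R n j) q0 p s)).
  by apply: eq_Rintegral => x _; exact: (@supply_decomp R n f xs q0 p x hs).
rewrite He; apply: eq_bigr => j _; rewrite RintegralZl //.
exact: (eq_integrable mD _ _ _ (hj j)).
Qed.

Theorem proposition3p6 (R : realType) (n : nat) (f : vecR R n -> vecR R n) :
  conversion_function f ->
  (finitely_passive_dyn f ->
     forall xs : vecR R n, in_simplex xs -> finitely_passive_op f xs) /\
  (finitely_lossless_dyn f ->
     forall xs : vecR R n, in_simplex xs -> finitely_lossless_op f xs).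
Proof.
move=> _; split=> [hP|hP] xs [xs0 xs1].
- have [L HL] := choice hP.
  have [m Hm] := choice (fun j => (HL j).1).
  exists (fun q => \sum_(j < n) xs j * L j q); split.
    exists (\sum_(j < n) xs j * m j) => q; apply: ler_sum => j _.
    by apply: ler_wpM2l => //; exact: Hm.
  move=> q0 p hp t t0 hi; rewrite (@combo R n f xs q0 p t xs1 hp t0 hi) -big_split /=.
  apply: ler_sum => j _; rewrite -mulrDr; apply: ler_wpM2l => //.
  apply: (HL j).2 => //; exact: supply_integrable hi.
- have [L HL] := choice hP.
  have [m Hm] := choice (fun j => (HL j).1).
  exists (fun q => \sum_(j < n) xs j * L j q); split.
    exists (\sum_(j < n) xs j * m j) => q; apply: ler_sum => j _.
    by apply: ler_wpM2l => //; exact: Hm.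
  move=> q0 p hp t t0 hi; rewrite (@combo R n f xs q0 p t xs1 hp t0 hi) -big_split /=.
  apply: eq_bigr => j _; rewrite -mulrDr; congr (_ * _).
  apply: (HL j).2 => //; exact: supply_integrable hi.
Qed.
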